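(* Let $G_{K,N}$ be the graph with vertex set $\{u_{ij},b_{ij}: i\in[K], j\in[N]\}$ whose edges are exactly: $u_{ij}\sim u_{ik}$ for $j\ne k$; $b_{ij}\sim u_{ik}$ for all $j,k\in[N]$; and for each $i\in[N]$ and $j\ne k$ in $[K]$: $u_{ji}\sim u_{ki}$, $b_{ji}\sim b_{ki}$, $b_{ji}\sim u_{ki}$. For $i\in[K]$ let $U_i=\{u_{ij}:j\in[N]\}$ and $B_i=\{b_{ij}:j\in[N]\}$. Then for every $i\in[K]$, the induced subgraph $G_{K,N}\big((\bigcup_{j\in[K]}B_j)\cup U_i\big)$ is perfect.
   Context: A graph is perfect if in every induced subgraph the clique number equals the chromatic number. *)

(* Defs.v *)
From mathcomp Require Import all_boot.
Set Implicit Arguments. Unset Strict Implicit. Unset Printing Implicit Defensive.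

Section Graphs.
Variable T : finType.
Variable e : rel T.

Definition clique (C : {set T}) : bool :=
  [forall x in C, forall y in C, (x != y) ==> e x y].

Definition clique_number (A : {set T}) : nat :=
  \max_(C : {set T} | (C \subset A) && clique C) #|C|.

(* A is properly colourable with colours in {0,..,k-1}
   (colour values are drawn from 'I_(#|T|.+1), which suffices for all k). *)
Definition colorable (A : {set T}) (k : nat) : bool :=
  [exists f : {ffun T -> 'I_(#|T|.+1)},
     [forall x in A, f x < k] &&
     [forall x in A, forall y in A, ((x != y) && e x y) ==> (f x != f y)]].

Lemma colorable_ex (A : {set T}) : exists k, colorable A k.
Proof.
exists #|T|; apply/existsP.
exists [ffun x => inord (enum_rank x)]; apply/andP; split.
  apply/forall_inP => x _; rewrite ffunE inordK ?ltn_ord //.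
  by rewrite ltnS ltnW.
apply/forall_inP => x _; apply/forall_inP => y _; apply/implyP => /andP [nxy _].
rewrite !ffunE; apply: contra nxy => /eqP /(congr1 val).
have H (z : T) : enum_rank z < #|T|.+1.
  by rewrite ltnS; apply: ltnW; apply: ltn_ord.
rewrite /= !inordK // => /val_inj /enum_rank_inj ->; exact: eqxx.
Qed.

Definition chromatic_number (A : {set T}) : nat := ex_minn (colorable_ex A).

Definition perfect (S : {set T}) : Prop :=
  forall A : {set T}, A \subset S -> clique_number A = chromatic_number A.
End Graphs.

(* The graph G_{K,N}: vertex (true, i, j) is u_{ij}, (false, i, j) is b_{ij}. *)
Definition GV (K N : nat) : finType := (bool * 'I_K * 'I_N)%type.

Definition is_u {K N} (v : GV K N) : bool := v.1.1.
Definition row {K N} (v : GV K N) : 'I_K := v.1.2.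
Definition col {K N} (v : GV K N) : 'I_N := v.2.

Definition Gedge (K N : nat) : rel (GV K N) := fun v w =>
  [||
      [&& is_u v, is_u w, row v == row w & col v != col w],
      (* b_{ij} ~ u_{ik} for all j, k (both orientations) *)
      [&& row v == row w & is_u v != is_u w]
    | (* same column, different rows: u-u, b-b, b-u *)
      (col v == col w) && (row v != row w)].

Definition Uset (K N : nat) (i : 'I_K) : {set GV K N} :=
  [set v | is_u v && (row v == i)].
Definition Ball (K N : nat) : {set GV K N} := [set v | ~~ is_u v].

(* Main.v *)
Require Import Defs.
From mathcomp Require Import all_boot.
From mathcomp Require Import zify.
Set Implicit Arguments. Unset Strict Implicit. Unset Printing Implicit Defensive.

Section General.
Variable T : finType.
Variable e : rel T.

Lemma clique_le (A C : {set T}) : C \subset A -> clique e C -> #|C| <= clique_number e A.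
Proof. by move=> h1 h2; apply: leq_bigmax_cond; rewrite h1 h2. Qed.

Lemma cn_le (A : {set T}) : clique_number e A <= #|T|.
Proof. by apply/bigmax_leqP => C _; apply: max_card. Qed.

Lemma col_lower (A : {set T}) k : colorable e A k -> clique_number e A <= k.
Proof.
case/existsP => f /andP [/forall_inP hlt /forall_inP hinj].
apply/bigmax_leqP => C /andP [sCA /forall_inP hC].
have finj : {in C &, injective f}.
  move=> x y xC yC fxy; apply/eqP; apply/negPn/negP => nxy.
  move/forall_inP: (hC x xC) => /(_ y yC) /implyP /(_ nxy) exy.
  move/forall_inP: (hinj x (subsetP sCA x xC)) => /(_ y (subsetP sCA y yC)).
  by rewrite nxy exy fxy eqxx.
rewrite -(card_in_imset finj).
have -> : #|f @: C| = size (map val (enum (f @: C))) by rewrite size_map -cardE.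
rewrite -(size_iota 0 k); apply: uniq_leq_size.
  by rewrite map_inj_uniq ?enum_uniq //; exact: val_inj.
move=> n /mapP [c]; rewrite mem_enum => /imsetP [x xC ->] ->.
by rewrite mem_iota add0n /=; exact: hlt x (subsetP sCA x xC).
Qed.

Lemma chrom_eq (A : {set T}) w : colorable e A w -> w <= clique_number e A ->
  chromatic_number e A = clique_number e A.
Proof.
move=> h2 h3; rewrite /chromatic_number; case: ex_minnP => n hn hmin.
apply/eqP; rewrite eqn_leq col_lower // andbT.
exact: leq_trans (hmin _ h2) h3.
Qed.
End General.

Lemma count_le (s t : seq nat) : uniq s -> count (mem t) s <= size t.
Proof.
move=> us; rewrite -size_filter; apply: uniq_leq_size; first exact: filter_uniq.
by move=> x; rewrite mem_filter => /andP[].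
Qed.

Section Main.
Variables (K N : nat) (i : 'I_K).
Local Notation T := (GV K N).
Local Notation e := (@Gedge K N).

Lemma edge_col (x y : T) : x != y -> col x == col y -> e x y.
Proof.
case: x => [[a b] c]; case: y => [[a' b'] c'].
rewrite /Gedge /is_u /row /col /= !xpair_eqE => nxy hc.
rewrite hc /=; case: (b =P b') => [hb|hb] /=; last by rewrite orbT.
subst; rewrite eqxx /= in nxy *; rewrite (eqP hc) eqxx !andbT in nxy.
by rewrite nxy orbT.
Qed.

Lemma edge_u (x y : T) : is_u x -> is_u y -> row x == row y -> x != y -> e x y.
Proof.
case: x => [[a b] c]; case: y => [[a' b'] c'].
rewrite /Gedge /is_u /row /col /= !xpair_eqE => -> -> hb nxy.
move: hb nxy => /eqP <- ; rewrite !eqxx /= => nxy; by rewrite nxy.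
Qed.

Lemma edge_ub (x y : T) : row x == row y -> is_u x != is_u y -> e x y.
Proof. by move=> h1 h2; rewrite /Gedge h1 h2 orbT. Qed.

Variable A : {set T}.
Hypothesis hA : A \subset (@Ball K N :|: @Uset K N i).

Lemma inS x : x \in A -> (~~ is_u x) || (row x == i).
Proof. by move/(subsetP hA); rewrite !inE; case/orP => [->|/andP[_ ->]]; rewrite ?orbT. Qed.

Definition w := clique_number e A.
Definition UA := [set x in A | is_u x].
Definition m := #|UA|.
Definition D c := [set x in A | [&& ~~ is_u x, col x == c & row x != i]].
Definition Col c := [set x in A | col x == c].
Definition uc c : T := (true, i, c).
Definition bc c : T := (false, i, c).
Definition gu x := index x (enum UA).
Definition forb c := (if uc c \in A then [:: gu (uc c)] else [::]) ++
   (if bc c \in A then [:: m] else [::]).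
Definition F c := [seq n <- iota 0 w | n \notin forb c].
Definition g x := if is_u x then gu x else if row x == i then m
   else nth 0 (F (col x)) (index x (enum (D (col x)))).

Lemma UA_clique : clique e UA.
Proof.
apply/forall_inP => x; rewrite inE => /andP [xA ux].
apply/forall_inP => y; rewrite inE => /andP [yA uy].
apply/implyP => nxy; apply: edge_u => //.
move: (inS xA) (inS yA); rewrite ux uy /= => /eqP -> /eqP ->; exact: eqxx.
Qed.

Lemma m_le : m <= w.
Proof. apply: clique_le; last exact: UA_clique. by apply/subsetP => x; rewrite inE => /andP[]. Qed.

Lemma mb_lt c : bc c \in A -> m < w.
Proof.
move=> bA; have := @clique_le _ e A (bc c |: UA).
rewrite cardsU1 inE /= andbF add1n; apply.
  by apply/subsetP => x; rewrite !inE => /orP [/eqP ->|/andP[]].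
apply/forall_inP => x; rewrite !inE => hx.
apply/forall_inP => y; rewrite !inE => hy.
apply/implyP => nxy.
case/orP: hx => [/eqP ?|/andP [xA ux]]; case/orP: hy => [/eqP ?|/andP [yA uy]]; subst.
- by rewrite eqxx in nxy.
- by apply: edge_ub; rewrite ?uy //= eq_sym; move: (inS yA); rewrite uy.
- by apply: edge_ub; rewrite ?ux //=; move: (inS xA); rewrite ux.
- apply: edge_u => //.
  move: (inS xA) (inS yA); rewrite ux uy /= => /eqP -> /eqP ->; exact: eqxx.
Qed.

Lemma Col_le c : #|Col c| <= w.
Proof.
apply: clique_le; first by apply/subsetP => x; rewrite inE => /andP[].
apply/forall_inP => x; rewrite inE => /andP [_ hx].
apply/forall_inP => y; rewrite inE => /andP [_ hy].
by apply/implyP => nxy; apply: edge_col; rewrite // (eqP hx) (eqP hy).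
Qed.

Lemma D_le c : #|D c| + size (forb c) <= w.
Proof.
apply: leq_trans (Col_le c).
rewrite [#|Col c|](cardsD1 (uc c)) [#|Col c :\ uc c|](cardsD1 (bc c)).
have -> : (uc c \in Col c) = (uc c \in A) by rewrite inE eqxx andbT.
have -> : (bc c \in Col c :\ uc c) = (bc c \in A) by rewrite !inE eqxx andbT.
have : D c \subset (Col c :\ uc c) :\ bc c.
  apply/subsetP => x; rewrite !inE => /andP [xA /and3P [ux cx rx]].
  rewrite xA cx; case: x ux cx rx {xA} => [[a b] c'] /=.
  rewrite /is_u /row /col /= => ux cx rx.
  by rewrite /bc /uc !xpair_eqE (negbTE rx) !andbF.
move/subset_leq_card; rewrite size_cat.
by case: (uc c \in A); case: (bc c \in A) => /=; lia.
Qed.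

Lemma F_size c : #|D c| <= size (F c).
Proof.
have h1 := D_le c.
have h2 : count (mem (forb c)) (iota 0 w) <= size (forb c) by apply: count_le; apply: iota_uniq.
have h3 := count_predC (mem (forb c)) (iota 0 w).
rewrite size_iota in h3.
rewrite /F size_filter.
have -> : count (fun n => n \notin forb c) (iota 0 w) = count (predC (mem (forb c))) (iota 0 w) by [].
lia.
Qed.


Lemma gu_lt x : x \in UA -> gu x < m.
Proof. by move=> xU; rewrite /gu /m cardE index_mem mem_enum. Qed.

Lemma gu_inj x y : x \in UA -> y \in UA -> x != y -> gu x != gu y.
Proof.
move=> xU yU; apply: contra => /eqP h.
by rewrite -(nth_index x (_ : x \in enum UA)) ?mem_enum // -/(gu x) h /gu nth_index ?mem_enum.
Qed.

Lemma D_idx x c : x \in D c -> index x (enum (D c)) < size (F c).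
Proof.
move=> xD; apply: leq_trans (F_size c).
by rewrite cardE index_mem mem_enum.
Qed.

Lemma gD x : x \in A -> ~~ is_u x -> row x != i ->
  g x = nth 0 (F (col x)) (index x (enum (D (col x)))) /\ x \in D (col x).
Proof.
move=> xA ux rx; rewrite /g (negbTE ux) (negbTE rx); split => //.
by rewrite inE xA ux rx eqxx.
Qed.

Lemma gD_F x : x \in A -> ~~ is_u x -> row x != i -> g x \in F (col x).
Proof.
move=> xA ux rx; case: (gD xA ux rx) => -> xD; apply: mem_nth; exact: D_idx.
Qed.

Lemma gD_inj x y c : x \in D c -> y \in D c -> x != y ->
  nth 0 (F c) (index x (enum (D c))) != nth 0 (F c) (index y (enum (D c))).
Proof.
move=> xD yD nxy; rewrite nth_uniq ?D_idx //; last first.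
  by rewrite filter_uniq // iota_uniq.
apply: contra nxy => /eqP h.
by rewrite -(nth_index x (_ : x \in enum (D c))) ?mem_enum // h nth_index ?mem_enum.
Qed.

Lemma g_lt x : x \in A -> g x < w.
Proof.
move=> xA; have := inS xA; rewrite /g.
case ux: (is_u x) => /=.
  move=> rx.
  apply: leq_trans m_le; apply: gu_lt; by rewrite inE xA ux.
case rx: (row x == i).
  move=> _; apply: (@mb_lt (col x)); move: xA ux rx; case: x => [[a b] c].
  rewrite /is_u /row /col /bc /= => xA ha /eqP hb; by rewrite -hb -ha.
move=> _; have := gD_F xA (negbT ux) (negbT rx).
by rewrite /g ux rx mem_filter mem_iota => /andP [_ /andP[]].
Qed.


Lemma xeq (x : T) : x = (is_u x, row x, col x).
Proof. by case: x => [[a b] c]. Qed.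

Lemma Gsym (x y : T) : e x y = e y x.
Proof.
case: x => [[a b] c]; case: y => [[a' b'] c']; rewrite /Gedge /is_u /row /col /=.
rewrite (eq_sym b) (eq_sym c) (eq_sym a).
by case: a; case: a'.
Qed.

Lemma g_mix x y : x \in A -> y \in A -> is_u x -> ~~ is_u y -> e x y -> g x != g y.
Proof.
move=> xA yA ux uy.
have xU : x \in UA by rewrite inE xA ux.
have := inS xA; rewrite ux /= => /eqP rx.
have gx : g x = gu x by rewrite /g ux.
case ry: (row y == i).
  move=> _; rewrite gx /g (negbTE uy) ry; by rewrite (ltn_eqF (gu_lt xU)).
rewrite /Gedge ux (negbTE uy) rx (eq_sym i) ry /= andbT => /eqP cxy.
have := gD_F yA uy (negbT ry); rewrite mem_filter => /andP [hnf _].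
have xe : uc (col y) = x by rewrite [RHS]xeq ux rx cxy.
move: hnf; rewrite /forb xe xA gx eq_sym; apply: contra => h.
by rewrite mem_cat inE h.
Qed.

Lemma g_bmix x y : x \in A -> y \in A -> ~~ is_u x -> ~~ is_u y -> row x == i ->
  row y != i -> col x == col y -> g x != g y.
Proof.
move=> xA yA ux uy rx ry cxy.
have gx : g x = m by rewrite /g (negbTE ux) rx.
have := gD_F yA uy ry; rewrite mem_filter => /andP [hnf _].
have xe : bc (col y) = x by rewrite [RHS]xeq (negbTE ux) (eqP rx) (eqP cxy).
move: hnf; rewrite /forb xe xA gx eq_sym; apply: contra => h.
by rewrite mem_cat !inE h orbT.
Qed.

Lemma g_bb x y : x \in A -> y \in A -> ~~ is_u x -> ~~ is_u y -> x != y -> e x y -> g x != g y.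
Proof.
move=> xA yA ux uy nxy.
rewrite /Gedge (negbTE ux) (negbTE uy) /= andbF /= => /andP [cxy rxy].
case rx: (row x == i); case ry: (row y == i).
- by rewrite (eqP rx) (eqP ry) eqxx in rxy.
- by apply: g_bmix; rewrite ?ry.
- by rewrite eq_sym; apply: g_bmix; rewrite ?rx // eq_sym.
- case: (gD xA ux (negbT rx)) => -> xD.
  case: (gD yA uy (negbT ry)) => -> yD.
  rewrite -(eqP cxy) in yD *; exact: gD_inj.
Qed.

Lemma g_ok x y : x \in A -> y \in A -> x != y -> e x y -> g x != g y.
Proof.
move=> xA yA nxy exy.
case ux: (is_u x); case uy: (is_u y).
- have := inS xA; have := inS yA; rewrite ux uy /= => ry rx.
  rewrite /g ux uy; apply: gu_inj => //; by rewrite inE ?xA ?yA ?ux ?uy.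
- by apply: g_mix; rewrite ?uy.
- by rewrite eq_sym; apply: g_mix; rewrite ?ux // Gsym.
- by apply: g_bb; rewrite ?ux ?uy.
Qed.

End Main.

Theorem lemma5 (K N : nat) (i : 'I_K) :
  perfect (@Gedge K N) (@Ball K N :|: @Uset K N i).
Proof.
move=> A hA; rewrite (@chrom_eq _ _ A (clique_number (@Gedge K N) A)) //.
have hlt x : x \in A -> g i A x < #|GV K N|.+1.
  move=> xA; rewrite ltnS; apply: leq_trans (cn_le _ A); exact: ltnW (g_lt hA xA).
apply/existsP; exists [ffun x => inord (g i A x)]; apply/andP; split.
  apply/forall_inP => x xA; rewrite ffunE inordK; [have := g_lt hA xA; rewrite /w; exact | exact: hlt].
apply/forall_inP => x xA; apply/forall_inP => y yA; apply/implyP => /andP [nxy exy].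
rewrite !ffunE; have := g_ok hA xA yA nxy exy; apply: contra => /eqP /(congr1 val).
by rewrite /= !inordK ?hlt // => ->.
Qed.
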